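(* Let $V$ be an irreducible cuspidal $\mathcal G$-module. Then either $t^{\mathbf r}$ acts injectively on $V$ for every $\mathbf r\in\mathbb Z^n\setminus\{\mathbf 0\}$, or $t^{\mathbf r}$ acts locally nilpotently on $V$ for every $\mathbf r\in\mathbb Z^n\setminus\{\mathbf 0\}$.
   Context: $n\ge 3$. $\mathcal A_n=\mathbb C[t_1^{\pm1},\dots,t_n^{\pm1}]$, $t^{\mathbf m}=t_1^{m_1}\cdots t_n^{m_n}$, $d_j=t_j\frac{\partial}{\partial t_j}$, $(\mathbf u|\mathbf v)=\sum_iu_iv_i$, $D(\mathbf u,\mathbf r)=\sum_iu_it^{\mathbf r}d_i$. $\mathcal D_n=\mathrm{span}\{D(\mathbf u,\mathbf r):(\mathbf u|\mathbf r)=0\}$ with $[D(\mathbf p,\mathbf m),D(\mathbf q,\mathbf k)]=D((\mathbf p|\mathbf k)\mathbf q-(\mathbf q|\mathbf m)\mathbf p,\mathbf m+\mathbf k)$; $\mathcal G=\mathcal D_n\ltimes\mathcal A_n$ with $[D(\mathbf u,\mathbf r),t^{\mathbf m}]=(\mathbf u|\mathbf m)t^{\mathbf r+\mathbf m}$, $[t^{\mathbf r},t^{\mathbf m}]=0$. $\mathcal H=\mathrm{span}\{d_j\}$; a cuspidal module is a weight module for $\mathcal H$ whose weight spaces have uniformly bounded finite dimension. *)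

(* Defs.v *)
From HB Require Import structures.
From mathcomp Require Import all_boot all_order all_algebra.
From mathcomp Require Import complex Rstruct.
Set Implicit Arguments. Unset Strict Implicit. Unset Printing Implicit Defensive.
Import Order.TTheory GRing.Theory Num.Theory.
Local Open Scope ring_scope.

Definition C : numClosedFieldType := (Rdefinitions.R)[i].

Definition zvec (n : nat) := {ffun 'I_n -> int}.
Definition cvec (n : nat) := {ffun 'I_n -> C}.

Definition pairing (n : nat) (u : cvec n) (r : zvec n) : C :=
  \sum_(i < n) u i * (r i)%:~R.

Definition evec (n : nat) (j : 'I_n) : cvec n := [ffun i => if i == j then 1 else 0].

(* A representation of G = D_n ⋉ A_n on a complex vector space V is given by
   operators rhoD u r  (image of D(u,r), meaningful for (u|r) = 0)
   and rhoA m (image of t^m), subject to linearity and the bracket relations. *)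
Definition is_Gmodule (n : nat) (V : lmodType C)
    (rhoD : cvec n -> zvec n -> V -> V) (rhoA : zvec n -> V -> V) : Prop :=
  (forall u r (a : C) (v w : V), rhoD u r (a *: v + w) = a *: rhoD u r v + rhoD u r w) /\
  (forall m (a : C) (v w : V), rhoA m (a *: v + w) = a *: rhoA m v + rhoA m w) /\
  (forall r (a : C) u1 u2 (v : V), pairing u1 r = 0 -> pairing u2 r = 0 ->
      rhoD (a *: u1 + u2) r v = a *: rhoD u1 r v + rhoD u2 r v) /\
  (forall p m q k (v : V), pairing p m = 0 -> pairing q k = 0 ->
      rhoD p m (rhoD q k v) - rhoD q k (rhoD p m v)
      = rhoD (pairing p k *: q - pairing q m *: p) (m + k) v) /\
  (forall u r m (v : V), pairing u r = 0 ->
      rhoD u r (rhoA m v) - rhoA m (rhoD u r v) = pairing u m *: rhoA (r + m) v) /\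
  (forall r m (v : V), rhoA r (rhoA m v) = rhoA m (rhoA r v)).

Definition dop (n : nat) (V : lmodType C) (rhoD : cvec n -> zvec n -> V -> V)
  (j : 'I_n) : V -> V := rhoD (evec j) 0.

Definition weight_space (n : nat) (V : lmodType C) (rhoD : cvec n -> zvec n -> V -> V)
  (lam : cvec n) (v : V) : Prop := forall j : 'I_n, dop rhoD j v = lam j *: v.

(* V is the (direct) sum of its weight spaces: every vector is a finite
   sum of weight vectors (sums of weight spaces for distinct weights are automatically direct). *)
Definition is_weight_module (n : nat) (V : lmodType C)
    (rhoD : cvec n -> zvec n -> V -> V) : Prop :=
  forall v : V, exists (k : nat) (lam : 'I_k -> cvec n) (w : 'I_k -> V),
    (forall i, weight_space rhoD (lam i) (w i)) /\ v = \sum_(i < k) w i.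

Definition lin_indep (V : lmodType C) (k : nat) (w : 'I_k -> V) : Prop :=
  forall c : 'I_k -> C, \sum_(i < k) c i *: w i = 0 -> forall i, c i = 0.

Definition dim_le (n : nat) (V : lmodType C) (rhoD : cvec n -> zvec n -> V -> V)
    (lam : cvec n) (N : nat) : Prop :=
  forall (k : nat) (w : 'I_k -> V),
    (forall i, weight_space rhoD lam (w i)) -> lin_indep w -> (k <= N)%N.

Definition is_cuspidal (n : nat) (V : lmodType C)
    (rhoD : cvec n -> zvec n -> V -> V) : Prop :=
  is_weight_module rhoD /\ exists N : nat, forall lam : cvec n, dim_le rhoD lam N.

Definition is_submodule (n : nat) (V : lmodType C)
    (rhoD : cvec n -> zvec n -> V -> V) (rhoA : zvec n -> V -> V) (W : V -> Prop) : Prop :=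
  W 0 /\ (forall (a : C) v w, W v -> W w -> W (a *: v + w)) /\
  (forall u r v, pairing u r = 0 -> W v -> W (rhoD u r v)) /\
  (forall m v, W v -> W (rhoA m v)).

Definition is_irreducible (n : nat) (V : lmodType C)
    (rhoD : cvec n -> zvec n -> V -> V) (rhoA : zvec n -> V -> V) : Prop :=
  (exists v : V, v != 0) /\
  forall W : V -> Prop, is_submodule rhoD rhoA W ->
    (forall v, W v -> v = 0) \/ (forall v, W v).

Definition locally_nilpotent (V : lmodType C) (f : V -> V) : Prop :=
  forall v : V, exists k : nat, iter k f v = 0.

(* Main.v *)
Require Import Defs.
From HB Require Import structures.
From mathcomp Require Import all_boot all_order all_algebra.
From mathcomp Require Import complex Rstruct.
Import Order.TTheory GRing.Theory Num.Theory.
Local Open Scope ring_scope.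
From mathcomp Require Import ring zify.
From Stdlib Require Import Classical.
Set Implicit Arguments. Unset Strict Implicit. Unset Printing Implicit Defensive.

Definition lin (V : lmodType C) (f : V -> V) :=
  forall (a : C) (v w : V), f (a *: v + w) = a *: f v + f w.

Lemma lin0 (V : lmodType C) (f : V -> V) : lin f -> f 0 = 0.
Proof.
move=> hf; have := hf 1 0 0; rewrite !scale1r addr0 => h.
by apply: (addrI (f 0)); rewrite addr0 -h.
Qed.

Lemma linZ (V : lmodType C) (f : V -> V) a v : lin f -> f (a *: v) = a *: f v.
Proof. by move=> hf; have := hf a v 0; rewrite !addr0 (lin0 hf) addr0. Qed.

Lemma linD (V : lmodType C) (f : V -> V) v w : lin f -> f (v + w) = f v + f w.
Proof. by move=> hf; have := hf 1 v w; rewrite !scale1r. Qed.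

Lemma linB (V : lmodType C) (f : V -> V) v w : lin f -> f (v - w) = f v - f w.
Proof.
move=> hf; rewrite -scaleN1r addrC linD // linZ //.
by rewrite scaleN1r addrC.
Qed.

Lemma lin_iter (V : lmodType C) (f : V -> V) k : lin f -> lin (iter k f).
Proof.
move=> hf; elim: k => [|k IH] a v w //=.
by rewrite IH hf.
Qed.

Lemma iter_comm (V : Type) (f g : V -> V) k x :
  (forall y, f (g y) = g (f y)) -> iter k f (g x) = g (iter k f x).
Proof. by move=> h; elim: k => //= k ->; rewrite h. Qed.

Lemma iter0v (V : lmodType C) (f : V -> V) k : lin f -> iter k f 0 = 0.
Proof. by move=> hf; elim: k => //= k ->; rewrite lin0. Qed.

Lemma comm_iter (V : lmodType C) (T D B : V -> V) :
  lin T -> lin D -> lin B ->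
  (forall x, D (T x) - T (D x) = B x) -> (forall x, B (T x) = T (B x)) ->
  forall j x, iter j.+1 T (D x) = D (iter j.+1 T x) - (j.+1)%:R *: iter j T (B x).
Proof.
move=> hT hD hB hDT hBT; elim=> [|j IH] x.
  by rewrite /= scale1r -(hDT x) opprB addrC subrK.
rewrite [in LHS]iterS IH linB // linZ //.
have -> : T (D (iter j.+1 T x)) = D (T (iter j.+1 T x)) - B (iter j.+1 T x).
  by rewrite -(hDT _) opprB addrC subrK.
rewrite -iter_comm // [iter j.+2 T x]iterS [iter j.+1 T (B x)]iterS.
rewrite -addrA -opprD; congr (_ - _).
  by rewrite -iterSr iterS.
have hc : forall y, T (B y) = B (T y) by move=> y; rewrite hBT.
rewrite -(iter_comm _ _ hc) iterS -{1}(scale1r (T _)) -scalerDl.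
by rewrite -[(j.+2)%:R]natr1 addrC.
Qed.

Lemma ker_step (V : lmodType C) (T D B : V -> V) :
  lin T -> lin D -> lin B ->
  (forall x, D (T x) - T (D x) = B x) -> (forall x, B (T x) = T (B x)) ->
  forall k x, iter k T x = 0 -> iter k.+1 T (D x) = 0.
Proof.
move=> hT hD hB hDT hBT k x hx.
rewrite (comm_iter hT hD hB hDT hBT) iterS hx lin0 // lin0 //.
by rewrite iter_comm // hx lin0 // scaler0 subr0.
Qed.

Lemma ker_iter (V : lmodType C) (T D B : V -> V) :
  lin T -> lin D -> lin B ->
  (forall x, D (T x) - T (D x) = B x) -> (forall x, B (T x) = T (B x)) ->
  forall a x, T x = 0 -> iter a.+1 T (iter a D x) = 0.
Proof.
move=> hT hD hB hDT hBT; elim=> [|a IH] x hx //.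
change (iter a.+2 T (D (iter a D x)) = 0); apply: (ker_step hT hD hB hDT hBT); exact: IH.
Qed.

Lemma exact_iter (V : lmodType C) (T D B : V -> V) :
  lin T -> lin D -> lin B ->
  (forall x, D (T x) - T (D x) = B x) -> (forall x, B (T x) = T (B x)) ->
  forall a x, T x = 0 ->
  iter a T (iter a D x) = ((-1) ^+ a * (a`!)%:R) *: iter a B x.
Proof.
move=> hT hD hB hDT hBT; elim=> [|a IH] x hx.
  by rewrite /= mulr1 scale1r.
change (iter a.+1 T (D (iter a D x)) = ((-1) ^+ a.+1 * (a.+1`!)%:R) *: B (iter a B x)).
rewrite (comm_iter hT hD hB hDT hBT).
have -> : iter a.+1 T (iter a D x) = 0 by exact: (ker_iter hT hD hB hDT hBT).
have hc : forall y, T (B y) = B (T y) by move=> y; rewrite hBT.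
rewrite lin0 // (iter_comm _ _ hc) IH // (linZ _ _ hB) sub0r scalerA -scaleNr.
congr (_ *: _).
by rewrite factS natrM exprS; ring.
Qed.

Lemma lin_sum (V : lmodType C) (f : V -> V) k (c : 'I_k -> C) (w : 'I_k -> V) :
  lin f -> f (\sum_(j < k) c j *: w j) = \sum_(j < k) c j *: f (w j).
Proof.
move=> hf; apply: (big_ind2 (fun a b => f a = b)); first exact: lin0.
  by move=> a1 b1 a2 b2 <- <-; rewrite linD.
by move=> j _; rewrite linZ.
Qed.

Lemma inj_nz (V : lmodType C) (f : V -> V) z :
  lin f -> injective f -> z != 0 -> f z != 0.
Proof.
move=> hf fi; apply: contra => /eqP h; apply/eqP; apply: fi; by rewrite h lin0.
Qed.

Lemma iter_inj_nz (V : lmodType C) (f : V -> V) k z :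
  lin f -> injective f -> z != 0 -> iter k f z != 0.
Proof. by move=> hf fi hz; elim: k => //= k IH; apply: inj_nz. Qed.

Lemma indep_orders (V : lmodType C) (T : V -> V) N (x : nat -> V) :
  lin T ->
  (forall i, (i <= N)%N -> iter i.+1 T (x i) = 0 /\ iter i T (x i) != 0) ->
  lin_indep (fun i : 'I_N.+1 => x i).
Proof.
move=> hT hx c hsum.
have step : forall i : 'I_N.+1, (forall j : 'I_N.+1, (i < j)%N -> c j = 0) -> c i = 0.
  move=> i hj.
  have := congr1 (iter i T) hsum.
  rewrite lin_sum; last exact: lin_iter.
  rewrite (iter0v _ hT) (bigD1 i) //= big1 ?addr0.
    move/eqP; rewrite scaler_eq0 => /orP [/eqP //|].
    by have [_ /negbTE ->] := hx i (ltn_ord i).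
  move=> j hji; have [hlt|hgt] := ltnP j i.
    have := hx j (ltn_ord j) => -[h0 _].
    by rewrite -(subnK hlt) iterD h0 iter0v // scaler0.
  have hij : (i < j)%N by rewrite ltn_neqAle eq_sym hji hgt.
  by rewrite hj // scale0r.
have : forall m (i : 'I_N.+1), (N - i <= m)%N -> c i = 0.
  elim=> [|m IH] i hi; apply: step => j hij.
    by have := ltn_ord j; lia.
  by apply: IH; lia.
by move=> h i; apply: (h N); rewrite leq_subr.
Qed.

Lemma core_contra n (V : lmodType C) (rhoD : cvec n -> zvec n -> V -> V)
    (T D B : V -> V) (P : nat -> V -> V) (w : nat -> V) (lam : cvec n) N :
  lin T -> lin D -> lin B ->
  (forall x, D (T x) - T (D x) = B x) -> (forall x, B (T x) = T (B x)) ->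
  injective B ->
  (forall a, lin (P a)) -> (forall a, injective (P a)) ->
  (forall a y, T (P a y) = P a (T y)) ->
  (forall a, T (w a) = 0) -> (forall a, w a != 0) ->
  (forall a, (a <= N)%N -> weight_space rhoD lam (P a (iter a D (w a)))) ->
  dim_le rhoD lam N -> False.
Proof.
move=> hT hD hB hDT hBT Bi hP Pi hPT hw0 hwnz hws hdim.
suff : (N.+1 <= N)%N by rewrite ltnn.
apply: (hdim N.+1 (fun i : 'I_N.+1 => P i (iter i D (w i)))).
  by move=> i; apply: hws; rewrite -ltnS.
apply: (indep_orders (x := fun a => P a (iter a D (w a))) hT) => i _; split.
  rewrite (iter_comm _ _ (hPT i)) (ker_iter hT hD hB hDT hBT) //; exact: lin0.
rewrite (iter_comm _ _ (hPT i)); apply: inj_nz => //.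
rewrite (exact_iter hT hD hB hDT hBT) // scaler_eq0 negb_or; apply/andP; split.
  rewrite mulf_eq0 negb_or signr_eq0 /= pnatr_eq0 -lt0n; exact: fact_gt0.
exact: iter_inj_nz.
Qed.

Lemma pairingD n (u1 u2 : cvec n) r : pairing (u1 + u2) r = pairing u1 r + pairing u2 r.
Proof.
rewrite /pairing -big_split /=; apply: eq_bigr => i _; by rewrite ffunE mulrDl.
Qed.

Lemma pairingZ n (c : C) (u : cvec n) r : pairing (c *: u) r = c * pairing u r.
Proof.
rewrite /pairing mulr_sumr; apply: eq_bigr => i _; by rewrite ffunE mulrA.
Qed.

Lemma pairing_evec n (j : 'I_n) (r : zvec n) : pairing (evec j) r = (r j)%:~R.
Proof.
rewrite /pairing (bigD1 j) //= big1 ?addr0; first by rewrite ffunE eqxx mul1r.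
by move=> i /negbTE hi; rewrite ffunE hi mul0r.
Qed.

Lemma pairing_u0 n (u : cvec n) : pairing u 0 = 0.
Proof. by rewrite /pairing big1 // => i _; rewrite ffunE mulr0. Qed.

Lemma pairing_0u n (r : zvec n) : pairing 0 r = 0.
Proof. by rewrite /pairing big1 // => i _; rewrite ffunE mul0r. Qed.

Definition toC n (m : zvec n) : cvec n := [ffun i => (m i)%:~R].

Lemma toCD n (m1 m2 : zvec n) : toC (m1 + m2) = toC m1 + toC m2.
Proof. by apply/ffunP => i; rewrite !ffunE rmorphD. Qed.

Lemma lin_scale (V : lmodType C) (c : C) (f : V -> V) : lin f -> lin (fun x => c *: f x).
Proof.
by move=> hf a v w; rewrite hf scalerDr !scalerA mulrC.
Qed.


Lemma G_linD n (V : lmodType C) rhoD rhoA : @is_Gmodule n V rhoD rhoA ->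
  forall u r, lin (rhoD u r).
Proof. by case=> h _ u r a v w; rewrite h. Qed.

Lemma G_linA n (V : lmodType C) rhoD rhoA : @is_Gmodule n V rhoD rhoA ->
  forall m, lin (rhoA m).
Proof. by case=> _ [h _] m a v w; rewrite h. Qed.

Lemma G_AA n (V : lmodType C) rhoD rhoA : @is_Gmodule n V rhoD rhoA ->
  forall r m x, rhoA r (rhoA m x) = rhoA m (rhoA r x).
Proof. by case=> _ [_ [_ [_ [_ h]]]]. Qed.

Lemma G_DA n (V : lmodType C) rhoD rhoA : @is_Gmodule n V rhoD rhoA ->
  forall u r m x, pairing u r = 0 ->
  rhoD u r (rhoA m x) - rhoA m (rhoD u r x) = pairing u m *: rhoA (r + m) x.
Proof. by case=> _ [_ [_ [_ [h _]]]]. Qed.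

Lemma G_D0 n (V : lmodType C) rhoD rhoA : @is_Gmodule n V rhoD rhoA ->
  forall r x, rhoD 0 r x = 0.
Proof.
case=> _ [_ [h _]] r x.
have := h r 1 0 0 x (pairing_0u r) (pairing_0u r).
rewrite scaler0 addr0 scale1r => e.
by apply: (addrI (rhoD 0 r x)); rewrite addr0 -e.
Qed.

Lemma G_DZ n (V : lmodType C) rhoD rhoA : @is_Gmodule n V rhoD rhoA ->
  forall (c : C) u r x, pairing u r = 0 -> rhoD (c *: u) r x = c *: rhoD u r x.
Proof.
move=> hG; have h0 := G_D0 hG; case: hG => _ [_ [h _]] c u r x hu.
have := h r c u 0 x hu (pairing_0u r).
by rewrite addr0 h0 addr0.
Qed.

Lemma G_DD n (V : lmodType C) rhoD rhoA : @is_Gmodule n V rhoD rhoA ->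
  forall p m q k (v : V), pairing p m = 0 -> pairing q k = 0 ->
      rhoD p m (rhoD q k v) - rhoD q k (rhoD p m v)
      = rhoD (pairing p k *: q - pairing q m *: p) (m + k) v.
Proof. by case=> _ [_ [_ [h _]]]. Qed.

Lemma wsA n (V : lmodType C) rhoD rhoA : @is_Gmodule n V rhoD rhoA ->
  forall m lam x, weight_space rhoD lam x ->
  weight_space rhoD (lam + toC m) (rhoA m x).
Proof.
move=> hG m lam x hx j; rewrite /dop.
have := G_DA hG m x (pairing_u0 (evec j)).
rewrite add0r pairing_evec => /eqP; rewrite subr_eq => /eqP ->.
rewrite [rhoD _ _ x]hx (linZ _ _ (G_linA hG m)) !ffunE scalerDl addrC.
done.
Qed.

Lemma wsD n (V : lmodType C) rhoD rhoA : @is_Gmodule n V rhoD rhoA ->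
  forall u m lam x, pairing u m = 0 -> weight_space rhoD lam x ->
  weight_space rhoD (lam + toC m) (rhoD u m x).
Proof.
move=> hG u m lam x hu hx j; rewrite /dop.
have := G_DD hG x (pairing_u0 (evec j)) hu.
rewrite pairing_u0 scale0r subr0 add0r pairing_evec (G_DZ hG _ _ hu).
move=> /eqP; rewrite subr_eq => /eqP ->.
rewrite [rhoD (evec j) 0 x]hx (linZ _ _ (G_linD hG u m)) !ffunE scalerDl addrC.
done.
Qed.

Lemma ws_iter n (V : lmodType C) (rhoD : cvec n -> zvec n -> V -> V) (F : V -> V) m :
  (forall lam x, weight_space rhoD lam x -> weight_space rhoD (lam + toC m) (F x)) ->
  forall k lam x, weight_space rhoD lam x ->
  weight_space rhoD (lam + toC (m *+ k)) (iter k F x).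
Proof.
move=> hF; elim=> [|k IH] lam x hx.
  rewrite mulr0n.
  have -> : lam + toC 0 = lam by apply/ffunP => i; rewrite !ffunE addr0.
  done.
rewrite mulrSr toCD addrA iterS; apply: hF; exact: IH.
Qed.

Lemma G_comm n (V : lmodType C) rhoD rhoA : @is_Gmodule n V rhoD rhoA ->
  forall u m r, pairing u m = 0 ->
  [/\ lin (fun x => pairing u r *: rhoA (m + r) x),
      (forall x, rhoD u m (rhoA r x) - rhoA r (rhoD u m x) = pairing u r *: rhoA (m + r) x) &
      (forall x, pairing u r *: rhoA (m + r) (rhoA r x) = rhoA r (pairing u r *: rhoA (m + r) x))].
Proof.
move=> hG u m r hu; split.
- exact/lin_scale/(G_linA hG).
- by move=> x; rewrite (G_DA hG _ _ hu).
- by move=> x; rewrite (linZ _ _ (G_linA hG r)) (G_AA hG).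
Qed.

Lemma dich n (V : lmodType C) rhoD rhoA : @is_Gmodule n V rhoD rhoA ->
  is_irreducible rhoD rhoA ->
  forall r, injective (rhoA r) \/ locally_nilpotent (rhoA r).
Proof.
move=> hG [_ hirr] r.
have hT := G_linA hG r.
pose W := fun v => exists k, iter k (rhoA r) v = 0.
have hW : is_submodule rhoD rhoA W.
  split; first by exists 0%N.
  split.
    move=> a v w [k1 h1] [k2 h2]; exists (k2 + k1)%N.
    rewrite (lin_iter _ hT) iterD h1 iter0v // scaler0 add0r addnC iterD h2.
    exact: iter0v.
  split.
    move=> u m v hu [k hk]; exists k.+1.
    have [hB hDT hBT] := G_comm hG r hu.
    exact: (ker_step hT (G_linD hG u m) hB hDT hBT).
  move=> m v [k hk]; exists k.
  rewrite (iter_comm _ _ (fun y => G_AA hG r m y)) hk; exact: lin0 (G_linA hG m).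
case: (hirr W hW) => h; [left|right].
  move=> x y hxy; apply/eqP; rewrite -subr_eq0; apply/eqP; apply: h.
  by exists 1%N; rewrite /= linB // hxy subrr.
by move=> v; apply: h.
Qed.

Definition npar n (a b : zvec n) := exists i j, a i * b j - a j * b i != 0.

Lemma npar_sym n (a b : zvec n) : npar a b -> npar b a.
Proof.
case=> i [j h]; exists i, j.
have -> : b i * a j - b j * a i = - (a i * b j - a j * b i) by ring.
by rewrite oppr_eq0.
Qed.

Lemma npar_sub n (a b : zvec n) : npar a b -> npar (a - b) b.
Proof.
case=> i [j h]; exists i, j; rewrite !ffunE.
have -> : (a i - b i) * b j - (a j - b j) * b i = a i * b j - a j * b i by ring.
done.
Qed.

Lemma mk_u n (a b : zvec n) : npar a b ->
  exists u : cvec n, pairing u a = 0 /\ pairing u b != 0.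
Proof.
case=> i [j h].
exists ((a j)%:~R *: evec i + (- (a i)%:~R) *: evec j).
rewrite !pairingD !pairingZ !pairing_evec; split; first by ring.
have -> : (a j)%:~R * (b i)%:~R + - (a i)%:~R * (b j)%:~R
   = - ((a i * b j - a j * b i)%:~R : C).
  by rewrite rmorphB !rmorphM /=; ring.
by rewrite oppr_eq0 intr_eq0.
Qed.

Lemma iter_inj (V : Type) (f : V -> V) k : injective f -> injective (iter k f).
Proof. by move=> fi; elim: k => //= k IH x y /fi /IH. Qed.

Lemma lastnz (V : lmodType C) (f : V -> V) k x :
  x != 0 -> iter k f x = 0 -> exists j, iter j f x != 0 /\ f (iter j f x) = 0.
Proof.
move=> hx; elim: k => [|k IH] /=; first by move=> h; rewrite h eqxx in hx.
have [h|h] := eqVneq (iter k f x) 0; first by move=> _; exact: IH.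
by move=> h2; exists k.
Qed.

Lemma ffun_nz n (r : zvec n) : r != 0 -> exists i, r i != 0.
Proof.
move=> hr; apply/not_all_not_ex => hall; move/eqP: hr; apply.
by apply/ffunP => i; rewrite ffunE; have := hall i; case: eqP.
Qed.

Lemma find_pair n (h2 : (1 < n)%N) (Inj Nil : zvec n -> Prop) r0 s0 :
  (forall x, Inj x \/ Nil x) -> r0 != 0 -> s0 != 0 -> Nil r0 -> Inj s0 ->
  exists r s, Nil r /\ Inj s /\ npar s r.
Proof.
move=> hd hr0 hs0 Nr Is.
case: (classic (npar s0 r0)) => hp; first by exists r0, s0.
have H : forall i j, s0 i * r0 j - s0 j * r0 i = 0.
  move=> i j; apply/eqP; case: eqP => // /eqP hne; exfalso; apply: hp; by exists i, j.
have [i hi] := ffun_nz hr0.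
have hsi : s0 i != 0.
  apply/negP => /eqP hsi; move/eqP: hs0; apply; apply/ffunP => k; rewrite ffunE.
  have := H k i; rewrite hsi mul0r subr0 => /eqP; rewrite mulf_eq0 (negbTE hi) orbF.
  by move/eqP.
pose o0 : 'I_n := Ordinal (ltnW h2); pose o1 : 'I_n := Ordinal h2.
pose j := if i == o0 then o1 else o0.
have hji : j != i.
  rewrite /j; case: (eqVneq i o0) => [->|hne]; first by [].
  by rewrite eq_sym.
pose x : zvec n := [ffun k => if k == j then 1 else 0].
have hxr : forall t : zvec n, t i != 0 -> npar x t.
  have hij : (i == j) = false by rewrite eq_sym (negbTE hji).
  move=> t ht; exists j, i; rewrite !ffunE eqxx hij.
  by rewrite mul1r mul0r subr0.
have [Ix|Nx] := hd x.
  by exists r0, x; split; [|split; [|exact: hxr]].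
by exists x, s0; split; [|split; [|apply: npar_sym; exact: hxr]].
Qed.

Lemma exists_wv n (V : lmodType C) rhoD rhoA :
  @is_irreducible n V rhoD rhoA -> is_weight_module rhoD ->
  exists lam x, weight_space rhoD lam x /\ x != 0.
Proof.
case=> [[v hv] _] hwm; have [k [lam [w [hws hsum]]]] := hwm v.
case: (classic (exists i, w i != 0)) => [[i hi]|hno].
  by exists (lam i), (w i).
move/eqP: hv; case; rewrite hsum big1 // => i _.
by apply/eqP; case: eqP => // /eqP hne; exfalso; apply: hno; exists i.
Qed.

Lemma to_ker n (V : lmodType C) rhoD rhoA : @is_Gmodule n V rhoD rhoA ->
  forall r (K : V -> Prop), (forall y, K y -> K (rhoA r y)) ->
  locally_nilpotent (rhoA r) ->
  (exists lam x, weight_space rhoD lam x /\ x != 0 /\ K x) ->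
  exists lam x, weight_space rhoD lam x /\ x != 0 /\ K x /\ rhoA r x = 0.
Proof.
move=> hG r K hK hnil [lam [x [hx [hnz Kx]]]].
have [k hk] := hnil x.
have [j [hj1 hj2]] := lastnz hnz hk.
exists (lam + toC (r *+ j)), (iter j (rhoA r) x); split.
  by apply: (ws_iter (wsA hG r)).
split=> //; split=> //.
by elim: j {hj1 hj2} => //= j IH; apply: hK.
Qed.

Lemma exact_nz (V : lmodType C) (T D B : V -> V) :
  lin T -> lin D -> lin B ->
  (forall x, D (T x) - T (D x) = B x) -> (forall x, B (T x) = T (B x)) ->
  injective B -> forall a x, T x = 0 -> x != 0 -> iter a T (iter a D x) != 0.
Proof.
move=> hT hD hB hDT hBT Bi a x hx hnz.
rewrite (exact_iter hT hD hB hDT hBT) // scaler_eq0 negb_or; apply/andP; split.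
  rewrite mulf_eq0 negb_or signr_eq0 /= pnatr_eq0 -lt0n; exact: fact_gt0.
exact: iter_inj_nz.
Qed.

Lemma configB n (V : lmodType C) rhoD rhoA : @is_Gmodule n V rhoD rhoA ->
  forall N, (forall lam, dim_le rhoD lam N) ->
  forall r s, locally_nilpotent (rhoA r) -> injective (rhoA s) ->
  locally_nilpotent (rhoA (s - r)) -> npar s r ->
  (exists lam x, weight_space rhoD lam x /\ x != 0) -> False.
Proof.
move=> hG N hdim r s Nr Is Nsr hp [lam0 [x0 [h0 hnz0]]].
have [lam1 [y [hy [hynz [_ hTy]]]]] :=
  to_ker hG (K := fun _ => True) (fun _ _ => I) Nr
    (ex_intro _ lam0 (ex_intro _ x0 (conj h0 (conj hnz0 I)))).
have hK : forall y, rhoA r y = 0 -> rhoA r (rhoA (s - r) y) = 0.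
  by move=> y' h; rewrite (G_AA hG) h; exact: lin0 (G_linA hG _).
have [lam [z [hz [hznz [hT1z hT2z]]]]] :=
  to_ker hG (r := s - r) (K := fun y => rhoA r y = 0) hK Nsr
    (ex_intro _ lam1 (ex_intro _ y (conj hy (conj hynz hTy)))).
have [u [hu1 hu2]] := mk_u (npar_sub hp).
have [u2 [hv1 hv2]] := mk_u (npar_sym (npar_sub hp)).
have [hB hDT hBT] := G_comm hG r hu1.
have Bi : injective (fun x => pairing u r *: rhoA (s - r + r) x).
  by move=> a b /(scalerI hu2); rewrite subrK; exact: Is.
have [hB2 hET hB2T] := G_comm hG (s - r) hv1.
have B2i : injective (fun x => pairing u2 (s - r) *: rhoA (r + (s - r)) x).
  by move=> a b /(scalerI hv2); rewrite addrC subrK; exact: Is.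
have hE1 : forall y, rhoD u2 r (rhoA r y) = rhoA r (rhoD u2 r y).
  move=> y'; apply/eqP; rewrite -subr_eq0; apply/eqP.
  by rewrite (G_DA hG _ _ hv1) hv1 scale0r.
have hlE := G_linD hG u2 r.
apply: (core_contra (T := rhoA r) (D := rhoD u (s - r))
   (B := fun x => pairing u r *: rhoA (s - r + r) x)
   (P := fun a => iter (N - a) (rhoA s)) (w := fun a => iter a (rhoD u2 r) z)
   (lam := lam + toC (s *+ N)) (rhoD := rhoD) (N := N)) => //.
- exact: (G_linA hG).
- exact: (G_linD hG).
- by move=> a; apply: lin_iter; exact: (G_linA hG).
- by move=> a; apply: iter_inj.
- by move=> a y'; rewrite (iter_comm _ _ (G_AA hG s r)).
- by move=> a; rewrite -(iter_comm _ _ hE1) hT1z iter0v.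
- move=> a; apply/negP => /eqP hw0.
  have := exact_nz (G_linA hG (s - r)) hlE hB2 hET hB2T B2i a hT2z hznz.
  by rewrite hw0 iter0v ?eqxx //; exact: (G_linA hG).
move=> a ha.
have := ws_iter (fun l x h => wsA hG s h) (N - a)
         (ws_iter (fun l x h => wsD hG hu1 h) a
           (ws_iter (fun l x h => wsD hG hv1 h) a hz)).
rewrite -!addrA -!toCD.
suff -> : r *+ a + ((s - r) *+ a + s *+ (N - a)) = s *+ N by [].
by rewrite mulrnBl addrA [r *+ a + _]addrC subrK -mulrnDr subnKC.
Qed.

Lemma configA n (V : lmodType C) rhoD rhoA : @is_Gmodule n V rhoD rhoA ->
  forall N, (forall lam, dim_le rhoD lam N) ->
  forall r s, locally_nilpotent (rhoA r) -> injective (rhoA s) ->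
  injective (rhoA (s - r)) -> npar s r ->
  (exists lam x, weight_space rhoD lam x /\ x != 0) -> False.
Proof.
move=> hG N hdim r s Nr Is Isr hp [lam0 [x0 [h0 hnz0]]].
have [lam [z [hz [hznz [_ hTz]]]]] :=
  to_ker hG (K := fun _ => True) (fun _ _ => I) Nr
    (ex_intro _ lam0 (ex_intro _ x0 (conj h0 (conj hnz0 I)))).
have [u [hu1 hu2]] := mk_u (npar_sub (npar_sub hp)).
have [hB hDT hBT] := G_comm hG r hu1.
have Bi : injective (fun x => pairing u r *: rhoA (s - r - r + r) x).
  by move=> a b /(scalerI hu2); rewrite subrK; exact: Isr.
have hlA := G_linA hG.
apply: (core_contra (T := rhoA r) (D := rhoD u (s - r - r))
   (B := fun x => pairing u r *: rhoA (s - r - r + r) x)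
   (P := fun a y => iter (N.*2 - a.*2) (rhoA (s - r)) (iter a (rhoA s) y))
   (w := fun _ => z)
   (lam := lam + toC ((s - r) *+ N.*2)) (rhoD := rhoD) (N := N)) => //.
- exact: (G_linD hG).
- move=> a c v w /=; rewrite (lin_iter _ (hlA s)).
  by rewrite (lin_iter _ (hlA (s - r))).
- move=> a x y /= h; apply: (iter_inj (k := a) Is); exact: (iter_inj (k := N.*2 - a.*2) Isr h).
- move=> a y' /=.
  by rewrite (iter_comm _ _ (G_AA hG s r)) (iter_comm _ _ (G_AA hG (s - r) r)).
move=> a ha.
have := ws_iter (fun l x h => wsA hG (s - r) h) (N.*2 - a.*2)
         (ws_iter (fun l x h => wsA hG s h) a
           (ws_iter (fun l x h => wsD hG hu1 h) a hz)).
rewrite -!addrA -!toCD.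
suff -> : (s + (- r - r)) *+ a + (s *+ a + (s - r) *+ (N.*2 - a.*2)) = (s - r) *+ N.*2 by [].
have e : s + (- r - r) + s = (s - r) *+ 2 by rewrite mulr2n !addrA addrAC.
rewrite addrA -mulrnDl e -mulrnA -mulrnDr.
congr (_ *+ _); rewrite -!muln2; lia.
Qed.

Unset Implicit Arguments.

Theorem proposition3p3 (n : nat) (hn : (3 <= n)%N) (V : lmodType C)
    (rhoD : cvec n -> zvec n -> V -> V) (rhoA : zvec n -> V -> V) :
  is_Gmodule rhoD rhoA -> is_irreducible rhoD rhoA -> is_cuspidal rhoD ->
  (forall r : zvec n, r != 0 -> injective (rhoA r)) \/
  (forall r : zvec n, r != 0 -> locally_nilpotent (rhoA r)).
Proof.
move=> hG hirr [hwm [N hdim]].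
have hd := dich hG hirr.
have hex := exists_wv hirr hwm.
case: (classic (forall r : zvec n, r != 0 -> injective (rhoA r))) => hI; [by left|right].
have [r0 [hr0 Nr0]] : exists r0 : zvec n, r0 != 0 /\ locally_nilpotent (rhoA r0).
  apply: NNPP => hno; apply: hI => x hx; case: (hd x) => // hnx.
  by exfalso; apply: hno; exists x.
move=> r hr; case: (hd r) => // Ir; exfalso.
have h2 : (1 < n)%N by apply: leq_trans hn.
have [r1 [s1 [N1 [I1 hp]]]] :=
  find_pair h2 (Inj := fun x => injective (rhoA x))
    (Nil := fun x => locally_nilpotent (rhoA x)) hd hr0 hr Nr0 Ir.
case: (hd (s1 - r1)) => h.
  exact: (configA hG hdim N1 I1 h hp hex).
exact: (configB hG hdim N1 I1 h hp hex).
Qed.
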